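(* Consider the group-weighted network variant described in the context, with two networks $(s_{N_k})_{k=1}^G$ and $(s'_{N_k})_{k=1}^G$ and all other parameters identical. Suppose $s'_{N_k}=z\,s_{N_k}$ for all $k$, where $1\le z\le 1/\max_k s_{N_k}$. Let $D_n^t$ and $D_n'^t$ be the corresponding sets of new-product consumers. Then $D_n^t\subseteq D_n'^t$ for all $t\ge1$.
   Context: Group-weighted network variant. There are $N$ individuals partitioned into $G\ge2$ nonempty groups $N_1,\dots,N_G$ (also denoting cardinalities). Members of $N_k$ have aspiration level $H_{N_k}$, with $H_{N_1}>\cdots>H_{N_G}$; write $H_i$ for individual $i$'s level. The incumbent $p_c$ gives payoff $v_L$ to everyone, where $H_{N_2}<v_L<H_{N_1}$. The new product $p_n$ gives individual $i$ the payoff $v_{Hi}\ge H_{N_1}$. Product similarities are $s_{p_c,p_c}=s_{p_n,p_n}=1$, $s_{p_n,p_c}=s_p\in(0,1)$ and $s_{p_c,p_n}=0$. A social network is a vector $(s_{N_k})_{k=1}^G$ with $s_{N_k}\in[0,1]$ and $\max_k s_{N_k}>0$. Individual similarities are $s_{i,i}=1$ and $s_{i,j}=s_{N_k}$ whenever $j\in N_k$ and $j\neq i$. Dynamics. In period $0$ everyone consumes $p_c$ ($D_c^0=\{1,\dots,N\}$, $D_n^0=\emptyset$). For $t\ge1$, $U_i^t(p_c)=\sum_{t'=0}^{t-1}\sum_{j\in D_c^{t'}}s_{i,j}(v_L-H_i)$ and $U_i^t(p_n)=s_pU_i^t(p_c)+\sum_{t'=0}^{t-1}\sum_{j\in D_n^{t'}}s_{i,j}(v_{Hj}-H_i)$.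 Individual $i\in D_n^t$ iff $U_i^t(p_n)>U_i^t(p_c)$; otherwise $i\in D_c^t$. *)

(* Defs.v *)
From mathcomp Require Import all_boot all_order all_algebra.
Set Implicit Arguments. Unset Strict Implicit. Unset Printing Implicit Defensive.
Import Order.TTheory GRing.Theory Num.Theory.
Local Open Scope ring_scope.

(* Individuals are 'I_N, groups are 'I_G (group N_1 is index 0, N_2 index 1, ...).
   grp i is the group of individual i; H k is the aspiration level of group k;
   vH i is the payoff of the new product to individual i; s k is s_{N_k}. *)

Section Dyn.
Variables (R : realFieldType) (N G : nat) (grp : 'I_N -> 'I_G)
  (H : 'I_G -> R) (vL sp : R) (vH : 'I_N -> R) (s : 'I_G -> R).

Definition isim (i j : 'I_N) : R := if i == j then 1 else s (grp j).

(* past : the history [:: D_n^0; ...; D_n^(t-1)]; D_c^t' is the complement. *)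
Definition Uc (past : seq {set 'I_N}) (i : 'I_N) : R :=
  \sum_(D <- past) \sum_(j | j \notin D) isim i j * (vL - H (grp i)).

Definition Un (past : seq {set 'I_N}) (i : 'I_N) : R :=
  sp * Uc past i + \sum_(D <- past) \sum_(j in D) isim i j * (vH j - H (grp i)).

Definition step (past : seq {set 'I_N}) : {set 'I_N} :=
  [set i | Uc past i < Un past i].

Fixpoint hist (t : nat) : seq {set 'I_N} :=
  match t with
  | 0 => [::]
  | t'.+1 => rcons (hist t') (if t' is 0 then set0 else step (hist t'))
  end.

(* D_n^t : period 0 everybody consumes p_c *)
Definition Dn (t : nat) : {set 'I_N} := if t is 0 then set0 else step (hist t).

End Dyn.

(* max_k s_{N_k} (for nonnegative s) *)
Definition smax (R : realFieldType) (G : nat) (s : 'I_G -> R) : R :=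
  \big[Num.max/0]_(k < G) s k.

(* Main.v *)
Require Import Defs.
From mathcomp Require Import all_boot all_order all_algebra.
From mathcomp Require Import lra.
Import Order.TTheory GRing.Theory Num.Theory.
Local Open Scope ring_scope.
Set Implicit Arguments. Unset Strict Implicit.

Section Aux.
Variables (R : realFieldType) (N G : nat) (grp : 'I_N -> 'I_G)
  (H : 'I_G -> R) (vL sp : R) (vH : 'I_N -> R).

Definition cc (i j : 'I_N) (D : {set 'I_N}) : R :=
  if j \in D then vH j - H (grp i) else (sp - 1) * (vL - H (grp i)).

Definition gg s (D : {set 'I_N}) i : R := \sum_j isim grp s i j * cc i j D.

Lemma sum_hist s (F : {set 'I_N} -> R) t :
  \sum_(D <- hist grp H vL sp vH s t) F D = \sum_(t' < t) F (Dn grp H vL sp vH s t').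
Proof.
elim: t => [|t IH]; first by rewrite big_nil big_ord0.
rewrite /= -cats1 big_cat /= big_seq1 IH big_ord_recr /=.
by case: t {IH}.
Qed.

Lemma diffU s past i :
  Un grp H vL sp vH s past i - Uc grp H vL s past i = \sum_(D <- past) gg s D i.
Proof.
rewrite /Un addrAC -{2}(mul1r (Uc _ _ _ _ _ _)) -mulrBl /Uc big_distrr -big_split /=.
apply: eq_bigr => D _; rewrite /gg [RHS](bigID (fun j => j \in D)) /= addrC big_distrr /=.
congr (_ + _); apply: eq_bigr => j Hj; rewrite /cc ?(negbTE Hj) ?Hj //.
by rewrite mulrCA.
Qed.

Lemma memDn s t i :
  (i \in Dn grp H vL sp vH s t) = (0 < t)%N && (0 < \sum_(t' < t) gg s (Dn grp H vL sp vH s t') i).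
Proof.
case: t => [|t]; first by rewrite /= inE.
have -> : Dn grp H vL sp vH s t.+1 = step grp H vL sp vH s (hist grp H vL sp vH s t.+1) by [].
rewrite /step inE -subr_gt0 diffU.
by rewrite (sum_hist s (fun D => gg s D i)).
Qed.

Hypothesis hsp : sp < 1.
Hypothesis hHv : forall i j, H (grp i) <= vH j.
Hypothesis hdich : forall i, vL < H (grp i) \/ H (grp i) < vL.

Definition aa (s : 'I_G -> R) D i : R := \sum_(j | j != i) isim grp s i j * cc i j D.

Lemma isim_ge0 (s : 'I_G -> R) (hs : forall k, 0 <= s k) i j : 0 <= isim grp s i j.
Proof. by rewrite /isim; case: eqP. Qed.

Lemma gg_split s D i : gg s D i = cc i i D + aa s D i.
Proof. by rewrite /gg (bigD1 i) //= /isim eqxx mul1r. Qed.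

Lemma mono_P (s : 'I_G -> R) (hs : forall k, 0 <= s k) (P : pred 'I_N) i (D D' : {set 'I_N}) :
  H (grp i) < vL -> D \subset D' ->
  \sum_(j | P j) isim grp s i j * cc i j D <= \sum_(j | P j) isim grp s i j * cc i j D'.
Proof.
move=> hh sub; apply: ler_sum => j _; apply: ler_wpM2l; first exact: isim_ge0.
rewrite /cc; case: (boolP (j \in D)) => jD; first by rewrite (subsetP sub j jD).
have hp : 0 <= (1 - sp) * (vL - H (grp i)) by apply: mulr_ge0; rewrite subr_ge0 ltW.
have := hHv i j; case: ifP => _ h; lra.
Qed.

Lemma gg_mono (s : 'I_G -> R) (hs : forall k, 0 <= s k) i (D D' : {set 'I_N}) :
  H (grp i) < vL -> D \subset D' -> gg s D i <= gg s D' i.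
Proof. by move=> h1 h2; have := mono_P hs (fun _ => true) h1 h2. Qed.

Lemma aa_mono (s : 'I_G -> R) (hs : forall k, 0 <= s k) i (D D' : {set 'I_N}) :
  H (grp i) < vL -> D \subset D' -> aa s D i <= aa s D' i.
Proof. exact: (mono_P hs (fun j => j != i)). Qed.

Lemma always_in (s : 'I_G -> R) (hs : forall k, 0 <= s k) i t :
  vL < H (grp i) -> (0 < t)%N -> i \in Dn grp H vL sp vH s t.
Proof.
move=> hh; rewrite memDn; case: t => [|t] //= _.
have hp : 0 < (1 - sp) * (H (grp i) - vL) by apply: mulr_gt0; rewrite subr_gt0.
rewrite big_ord_recl /=.
apply: ltr_wpDr.
  apply: sumr_ge0 => t' _; apply: sumr_ge0 => j _; apply: mulr_ge0; first exact: isim_ge0.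
  rewrite /cc; have := hHv i j; case: ifP => _ h; lra.
rewrite /gg (bigD1 i) //= /isim eqxx mul1r /cc inE.
apply: ltr_wpDr; last by lra.
apply: sumr_ge0 => j _; apply: mulr_ge0; first by case: eqP.
rewrite inE; lra.
Qed.

Lemma Dmono (s : 'I_G -> R) (hs : forall k, 0 <= s k) t t' :
  (t' <= t)%N -> Dn grp H vL sp vH s t' \subset Dn grp H vL sp vH s t.
Proof.
elim: t t' => [|t IH] t' le.
  by move: le; rewrite leqn0 => /eqP ->.
move: le; rewrite leq_eqVlt => /orP [/eqP -> //|lt].
apply: subset_trans (IH t' lt) _.
apply/subsetP => i; case: t IH {lt} => [|t] IH.
  by rewrite memDn.
move=> hi; case: (hdich i) => hh; first exact: always_in.
move: hi; rewrite !memDn /= => hi.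
rewrite big_ord_recr /=.
have hg : 0 < gg s (Dn grp H vL sp vH s t.+1) i.
  rewrite ltNge; apply/negP => hle.
  have : \sum_(t' < t.+1) gg s (Dn grp H vL sp vH s t') i <= 0.
    apply: sumr_le0 => u _; apply: le_trans hle.
    apply: gg_mono => //; apply: IH; exact: ltnW (ltn_ord u).
  by rewrite leNgt hi.
by apply: addr_gt0.
Qed.

Lemma Apos (s : 'I_G -> R) (hs : forall k, 0 <= s k) i (hh : H (grp i) < vL) t :
  i \in Dn grp H vL sp vH s t ->
  0 < \sum_(t' < t) aa s (Dn grp H vL sp vH s t') i.
Proof.
elim: t => [|t IH] hi; first by move: hi; rewrite memDn.
case: (boolP (i \in Dn grp H vL sp vH s t)) => hit.
  have A := IH hit.
  rewrite big_ord_recr /=; apply: addr_gt0 => //.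
  rewrite ltNge; apply/negP => hle.
  have : \sum_(t' < t) aa s (Dn grp H vL sp vH s t') i <= 0.
    apply: sumr_le0 => t' _; apply: le_trans hle.
    apply: aa_mono => //; apply: Dmono => //; exact: ltnW (ltn_ord t').
  by rewrite leNgt A.
move: hi; rewrite memDn => /andP [_ hi].
have hB : \sum_(t' < t.+1) cc i i (Dn grp H vL sp vH s t') <= 0.
  apply: sumr_le0 => t' _; rewrite /cc.
  have hp : 0 <= (1 - sp) * (vL - H (grp i)) by apply: mulr_ge0; rewrite subr_ge0 ltW.
  have -> : (i \in Dn grp H vL sp vH s t') = false.
    apply/negP => h; move/negP: hit; apply.
    have le : (t' <= t)%N by rewrite -ltnS ltn_ord.
    exact: (subsetP (Dmono hs le)).
  by rewrite -oppr_ge0 -mulNr opprB.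
move: hi; rewrite (eq_bigr _ (fun t' _ => gg_split s _ i)) big_split /=.
lra.
Qed.

End Aux.
Unset Implicit Arguments.

Theorem proposition5 (R : realFieldType) (N G : nat) (grp : 'I_N -> 'I_G)
  (H : 'I_G -> R) (vL sp : R) (vH : 'I_N -> R) (s s' : 'I_G -> R) (z : R) :
  (2 <= G)%N ->
  (forall k : 'I_G, exists i : 'I_N, grp i = k) ->
  (forall k l : 'I_G, (k < l)%N -> H l < H k) ->
  (forall k : 'I_G, nat_of_ord k = 1%N -> H k < vL) ->
  (forall k : 'I_G, nat_of_ord k = 0%N -> vL < H k) ->
  (forall (i : 'I_N) (k : 'I_G), nat_of_ord k = 0%N -> H k <= vH i) ->
  0 < sp < 1 ->
  (forall k, 0 <= s k <= 1) ->
  0 < smax s ->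
  (forall k, s' k = z * s k) ->
  1 <= z <= 1 / smax s ->
  forall t : nat, (1 <= t)%N ->
    Dn grp H vL sp vH s t \subset Dn grp H vL sp vH s' t.
Proof.
move=> hG _ hdec h1 h0 hv /andP [_ hsp] hs01 _ hs' /andP [hz _] t _.
have hs : forall k, 0 <= s k by move=> k; case/andP: (hs01 k).
have hsz : forall k, 0 <= s' k by move=> k; rewrite hs'; apply: mulr_ge0 => //; lra.
have lt0 : (0 < G)%N by apply: leq_trans hG.
have lt1 : (1 < G)%N by [].
pose k0 : 'I_G := Ordinal lt0.
pose k1 : 'I_G := Ordinal lt1.
have hHv : forall i j, H (grp i) <= vH j.
  move=> i j; apply: le_trans (hv j k0 erefl).
  case: (posnP (grp i)) => hi.
    by have -> : grp i = k0 by apply: val_inj.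
  by apply/ltW/hdec.
have hdich : forall i, vL < H (grp i) \/ H (grp i) < vL.
  move=> i; case: (posnP (grp i)) => hi; first by left; apply: h0.
  right; case: (ltngtP 1 (grp i)) => c.
  - apply: lt_trans (h1 k1 erefl); exact: hdec.
  - by move: c hi; case: (nat_of_ord (grp i)) => [|[|]].
  - exact: h1.
suff: forall n t', (t' < n)%N -> Dn grp H vL sp vH s t' \subset Dn grp H vL sp vH s' t'.
  by apply.
elim=> [|n IH] t' //; rewrite ltnS leq_eqVlt => /orP [/eqP ->|]; last exact: IH.
apply/subsetP => i hi.
case: (hdich i) => hh.
  by apply: (always_in hsp hHv hsz hh); move: hi; rewrite memDn => /andP [].
have hA := Apos hsp hHv hdich hs hh hi.
move: hi; rewrite !memDn => /andP [-> hi] /=.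
have step1 : \sum_(u < n) gg grp H vL sp vH s' (Dn grp H vL sp vH s u) i <=
             \sum_(u < n) gg grp H vL sp vH s' (Dn grp H vL sp vH s' u) i.
  apply: ler_sum => u _; apply: (gg_mono hsp hHv hsz hh); exact: IH.
apply: lt_le_trans step1.
have e1 : forall D, aa grp H vL sp vH s' D i = z * aa grp H vL sp vH s D i.
  move=> D; rewrite /aa big_distrr /=; apply: eq_bigr => j hj.
  by rewrite /isim eq_sym (negbTE hj) hs' mulrA.
move: hi; rewrite (eq_bigr _ (fun u _ => gg_split grp H vL sp vH s _ i)) big_split /=.
rewrite (eq_bigr _ (fun u _ => gg_split grp H vL sp vH s' _ i)) big_split /=.
rewrite (eq_bigr _ (fun t' _ => e1 _)) -big_distrr /=.
nra.
Qed.
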